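(* Let $\alpha,\beta\in\mathbb{C}$ be constants and $h,g:\mathbb{Z}^2\to\mathbb{C}$ satisfy $\widehat{h}-\widetilde{h}=\widetilde{\widetilde{g}}-g$ and $(h+\widetilde g)g=\beta^2-\alpha^2$. For $p$ in an open set, let $\varphi_1=\varphi_1(n,m;p)$, $\varphi_2=\varphi_2(n,m;p)$ be two linearly independent solutions of $$\widetilde{\widetilde{\varphi}}+h\,\widetilde{\varphi}+\alpha^2\varphi=p^2\varphi,\qquad \widehat{\varphi}=\widetilde{\varphi}-g\,\varphi,$$ depending differentiably on $p$, and write $\varphi_{\ell,p}=\partial\varphi_\ell/\partial p$. Let $s^2=\alpha^2-p^2$, $t^2=\beta^2-p^2$, and let $\rho$ be the constant with $\varphi_1\widetilde\varphi_2-\varphi_2\widetilde\varphi_1=\rho\,s^{2n}t^{2m}$. For constants $A,B,D$ define $$\chi=A\,x_{11}+B\,(x_{12}+x_{21})+D\,x_{22},\qquad x_{ij}=\varphi_i\widetilde{\varphi}_{j,p}-\widetilde{\varphi}_j\varphi_{i,p}\ (i,j=1,2).$$ Then $$s^4\chi\widehat{\chi}+\widetilde{\chi}\widehat{\widetilde{\chi}}-t^4\chi\widetilde{\chi}-\widehat{\chi}\widehat{\widetilde{\chi}}=(\alpha^2-\beta^2)\Big(\chi\widehat{\widetilde{\chi}}+\widetilde{\chi}\widehat{\chi}+4p^2\delta\,s^{4n}t^{4m}\Big),\qquad \delta=\rho^2(AD-B^2).$$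
   Context: Shift notation: for a function $f$ on $\mathbb{Z}^2$ (variables $n,m$), $\widetilde f(n,m)=f(n+1,m)$, $\widehat f(n,m)=f(n,m+1)$, and combined accents denote composed shifts; $h,g,\alpha,\beta$ do not depend on $p$. *)

(* Defs.v *)
From HB Require Import structures.
From mathcomp Require Import all_boot all_order all_algebra.
From mathcomp Require Import complex.
From mathcomp Require Import all_classical all_reals all_analysis.
Set Implicit Arguments. Unset Strict Implicit. Unset Printing Implicit Defensive.
Import Order.TTheory GRing.Theory Num.Theory.
Local Open Scope ring_scope.

Definition Cx (R : realType) : numFieldType := R[i].

Definition xij (R : realType) (fi fj : int -> int -> Cx R -> Cx R)
    (n m : int) (p : Cx R) : Cx R :=
  fi n m p * derive1 (fj (n + 1) m : (Cx R)^o -> (Cx R)^o) p - fj (n + 1) m p * derive1 (fi n m : (Cx R)^o -> (Cx R)^o) p.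

Definition chi (R : realType) (A B D : Cx R) (f1 f2 : int -> int -> Cx R -> Cx R)
    (n m : int) (p : Cx R) : Cx R :=
  A * xij f1 f1 n m p + B * (xij f1 f2 n m p + xij f2 f1 n m p)
  + D * xij f2 f2 n m p.

(* Main.v *)
Require Import Defs.
From HB Require Import structures.
From mathcomp Require Import all_boot all_order all_algebra.
From mathcomp Require Import complex.
From mathcomp Require Import all_classical all_reals all_analysis.
Import Order.TTheory GRing.Theory Num.Theory.
Local Open Scope ring_scope.
Local Open Scope classical_set_scope.

From mathcomp Require Import ring.

Definition chiv {F : fieldType} (A B D u1 u2 du1 du2 v1 v2 dv1 dv2 : F) : F :=
  A * (u1 * dv1 - v1 * du1) + B * ((u1 * dv2 - v2 * du1) + (u2 * dv1 - v1 * du2))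
  + D * (u2 * dv2 - v2 * du2).

Lemma alg (F : fieldType) (A B D p al2 be2 h0 h1 g0 g1 g2
  a1 a2 b1 b2 c1 c2 d1 d2 e1 e2 f1 f2 k1 k2
  da1 da2 db1 db2 dc1 dc2 dd1 dd2 de1 de2 df1 df2 dk1 dk2 : F) :
  (h0 + g1) * g0 = be2 - al2 ->
  (h1 + g2) * g1 = be2 - al2 ->
  c1 = p^+2 * a1 - h0 * b1 - al2 * a1 ->
  c2 = p^+2 * a2 - h0 * b2 - al2 * a2 ->
  dc1 = - h0 * db1 + (p^+2 - al2) * da1 + 2 * p * a1 ->
  dc2 = - h0 * db2 + (p^+2 - al2) * da2 + 2 * p * a2 ->
  d1 = p^+2 * b1 - h1 * c1 - al2 * b1 ->
  d2 = p^+2 * b2 - h1 * c2 - al2 * b2 ->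
  dd1 = - h1 * dc1 + (p^+2 - al2) * db1 + 2 * p * b1 ->
  dd2 = - h1 * dc2 + (p^+2 - al2) * db2 + 2 * p * b2 ->
  e1 = b1 - g0 * a1 -> e2 = b2 - g0 * a2 ->
  de1 = db1 - g0 * da1 -> de2 = db2 - g0 * da2 ->
  f1 = c1 - g1 * b1 -> f2 = c2 - g1 * b2 ->
  df1 = dc1 - g1 * db1 -> df2 = dc2 - g1 * db2 ->
  k1 = d1 - g2 * c1 -> k2 = d2 - g2 * c2 ->
  dk1 = dd1 - g2 * dc1 -> dk2 = dd2 - g2 * dc2 ->
  let s2 := al2 - p ^+ 2 in
  let t2 := be2 - p ^+ 2 in
  let X00 := chiv A B D a1 a2 da1 da2 b1 b2 db1 db2 in
  let X10 := chiv A B D b1 b2 db1 db2 c1 c2 dc1 dc2 in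
  let X01 := chiv A B D e1 e2 de1 de2 f1 f2 df1 df2 in
  let X11 := chiv A B D f1 f2 df1 df2 k1 k2 dk1 dk2 in
  s2 ^+ 2 * X00 * X01 + X10 * X11 - t2 ^+ 2 * X00 * X10 - X01 * X11
  = (al2 - be2) * (X00 * X11 + X10 * X01
       + 4 * p ^+ 2 * (A * D - B ^+ 2) * (a1 * b2 - a2 * b1) ^+ 2).
Proof.
move=> K1 K2; do 20 intro; subst.
move=> s2 t2 X00 X10 X01 X11; rewrite /s2 /t2 /X00 /X10 /X01 /X11 {s2 t2 X00 X10 X01 X11}.
rewrite /chiv.
have [g10|g1n0] := eqVneq g1 0.
  subst g1.
  have Hb : be2 = al2 by apply/eqP; rewrite -subr_eq0 -K2 mulr0.
  subst be2.
  move: K1; rewrite subrr addr0 => /eqP; rewrite mulf_eq0 => /orP[]/eqP H0; subst; ring.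
have Hbe : be2 = (h0 + g1) * g0 + al2 by rewrite K1 subrK.
have Hh1 : h1 = (h0 + g1) * g0 / g1 - g2.
  by rewrite K1 -K2 mulfK // addrK.
subst h1 be2.
field.
exact: g1n0.
Qed.

Lemma dlin (R : realType) (f f0 f1 : (Cx R)^o -> (Cx R)^o) (a b c : Cx R) (p : (Cx R)^o) :
  (\forall q \near p, f q = a * f1 q + (b * q ^+ 2 + c) * f0 q) ->
  derivable f0 p 1 -> derivable f1 p 1 ->
  derive1 f p = a * derive1 f1 p + (b * p ^+ 2 + c) * derive1 f0 p + 2 * b * p * f0 p.
Proof.
set V := (Cx R)^o.
move=> Hn d0 d1.
rewrite !derive1E.
have -> : 'D_1 f p = 'D_1 (fun q : V => (a * f1 q + (b * q ^+ 2 + c) * f0 q : V)) p.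
  by apply: near_eq_derive; near=> q; rewrite (near Hn q).
pose F := fun q : V => (a * f1 q : V).
pose I := fun q : V => (q : V).
pose P := fun q : V => (b * (I q * I q) + c : V).
pose G := fun q : V => (P q * f0 q : V).
have dI : derivable I p 1 by exact: derivable_id.
have DI : 'D_1 I p = 1 by exact: derive_id.
have dc : forall k : V, derivable (fun _ : V => k) p 1 by move=> k; exact: derivable_cst.
have Dc : forall k : V, 'D_1 (fun _ : V => k) p = 0 by move=> k; exact: derive_cst.
have dII : derivable (fun q => (I q * I q : V)) p 1 by exact: (@derivableM (Cx R) V I I p 1 dI dI).
have DII : 'D_1 (fun q => (I q * I q : V)) p = 2 * p.
  rewrite (@deriveM (Cx R) V I I p 1 dI dI) DI /I /=.
  by change (p * 1 + p * 1 = 2 * p); rewrite mulr1 -mulr2n mulr_natl.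
have dbII : derivable (fun q => (b * (I q * I q) : V)) p 1.
  exact: (@derivableM (Cx R) V (fun _ => b) (fun q => (I q * I q : V)) p 1 (dc b) dII).
have DbII : 'D_1 (fun q => (b * (I q * I q) : V)) p = 2 * b * p.
  rewrite (@deriveM (Cx R) V (fun _ => b) (fun q => (I q * I q : V)) p 1 (dc b) dII) DII Dc.
  by change (b * (2 * p) + (I p * I p) * 0 = 2 * b * p); rewrite mulr0 addr0 mulrA [b * 2]mulrC.
have dP : derivable P p 1.
  exact: (@derivableD (Cx R) V V _ (fun _ => c) p 1 dbII (dc c)).
have DP : 'D_1 P p = 2 * b * p.
  by rewrite (@deriveD (Cx R) V V _ (fun _ => c) p 1 dbII (dc c)) DbII Dc addr0.
have dF : derivable F p 1.
  exact: (@derivableM (Cx R) V (fun _ => a) f1 p 1 (dc a) d1).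
have DF : 'D_1 F p = a * 'D_1 f1 p.
  rewrite (@deriveM (Cx R) V (fun _ => a) f1 p 1 (dc a) d1) Dc.
  by change (a * 'D_1 f1 p + f1 p * 0 = a * 'D_1 f1 p); rewrite mulr0 addr0.
have dG : derivable G p 1.
  exact: (@derivableM (Cx R) V P f0 p 1 dP d0).
have DG : 'D_1 G p = P p * 'D_1 f0 p + f0 p * (2 * b * p).
  rewrite (@deriveM (Cx R) V P f0 p 1 dP d0) DP.
  done.
rewrite (@deriveD (Cx R) V V F G p 1 dF dG) DF DG /P /I /=.
change (a * 'D_1 f1 p + ((b * (p * p) + c) * 'D_1 f0 p + f0 p * (2 * b * p)) =
   a * 'D_1 f1 p + (b * p ^+ 2 + c) * 'D_1 f0 p + 2 * b * p * f0 p).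
by rewrite expr2 addrA [f0 p * _]mulrC.
Unshelve. all: by end_near.
Qed.

Theorem proposition4p3 (R : realType) (alpha beta : Cx R)
    (h g : int -> int -> Cx R)
    (Hhg1 : forall n m : int,
        h n (m + 1) - h (n + 1) m = g (n + 2) m - g n m)
    (Hhg2 : forall n m : int,
        (h n m + g (n + 1) m) * g n m = beta ^+ 2 - alpha ^+ 2)
    (U : set (Cx R)^o) (HU : open U)
    (phi1 phi2 : int -> int -> Cx R -> Cx R)
    (Hsol : forall p, U p -> forall n m : int,
        (phi1 (n + 2) m p + h n m * phi1 (n + 1) m p + alpha ^+ 2 * phi1 n m p
           = p ^+ 2 * phi1 n m p) /\
        (phi1 n (m + 1) p = phi1 (n + 1) m p - g n m * phi1 n m p) /\
        (phi2 (n + 2) m p + h n m * phi2 (n + 1) m p + alpha ^+ 2 * phi2 n m p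
           = p ^+ 2 * phi2 n m p) /\
        (phi2 n (m + 1) p = phi2 (n + 1) m p - g n m * phi2 n m p))
    (Hindep : forall p, U p -> forall c1 c2 : Cx R,
        (forall n m : int, c1 * phi1 n m p + c2 * phi2 n m p = 0) ->
        c1 = 0 /\ c2 = 0)
    (Hdiff : forall p, U p -> forall n m : int,
        derivable (phi1 n m : (Cx R)^o -> (Cx R)^o) p 1 /\
        derivable (phi2 n m : (Cx R)^o -> (Cx R)^o) p 1)
    (Hst : forall p, U p -> alpha ^+ 2 - p ^+ 2 != 0 /\ beta ^+ 2 - p ^+ 2 != 0)
    (rho : Cx R -> Cx R)
    (Hrho : forall p, U p -> forall n m : int,
        phi1 n m p * phi2 (n + 1) m p - phi2 n m p * phi1 (n + 1) m p
        = rho p * (alpha ^+ 2 - p ^+ 2) ^ n * (beta ^+ 2 - p ^+ 2) ^ m)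
    (A B D : Cx R) :
  forall p, U p -> forall n m : int,
    let s2 := alpha ^+ 2 - p ^+ 2 in
    let t2 := beta ^+ 2 - p ^+ 2 in
    let X := fun a b : int => chi A B D phi1 phi2 a b p in
    let delta := rho p ^+ 2 * (A * D - B ^+ 2) in
    s2 ^+ 2 * X n m * X n (m + 1) + X (n + 1) m * X (n + 1) (m + 1)
      - t2 ^+ 2 * X n m * X (n + 1) m - X n (m + 1) * X (n + 1) (m + 1)
    = (alpha ^+ 2 - beta ^+ 2) *
      (X n m * X (n + 1) (m + 1) + X (n + 1) m * X n (m + 1)
       + 4 * p ^+ 2 * delta * s2 ^ (2 * n) * t2 ^ (2 * m)).
Proof.
move=> p Up n m s2 t2 X delta.
have Un : \forall q \near (p : (Cx R)^o), U q.
  by apply: open_nbhs_nbhs; split.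
have solve1 : forall (x y z hh al q : Cx R), x + hh * y + al * z = q * z ->
    x = - hh * y + (1 * q + - al) * z.
  move=> x y z hh al q E.
  have -> : x = (x + hh * y + al * z) - hh * y - al * z by ring.
  rewrite E; ring.
have solve2 : forall (x y z gg : Cx R), x = y - gg * z -> x = 1 * y + (0 * p ^+ 2 + - gg) * z.
  by move=> x y z gg ->; ring.
have Drec : forall phi : int -> int -> Cx R -> Cx R,
   (forall q, U q -> forall k l : int, 
      phi (k + 2) l q + h k l * phi (k + 1) l q + alpha ^+ 2 * phi k l q = q ^+ 2 * phi k l q) ->
   (forall k l : int, derivable (phi k l : (Cx R)^o -> (Cx R)^o) p 1) ->
   forall k l : int,
   derive1 (phi (k + 2) l : (Cx R)^o -> (Cx R)^o) p =
     - h k l * derive1 (phi (k + 1) l : (Cx R)^o -> (Cx R)^o) p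
     + (p ^+ 2 - alpha ^+ 2) * derive1 (phi k l : (Cx R)^o -> (Cx R)^o) p + 2 * p * phi k l p.
  move=> phi Hphi Hd k l.
  rewrite (@dlin R (phi (k + 2) l) (phi k l) (phi (k + 1) l) (- h k l) 1 (- alpha ^+ 2) p).
  - by rewrite mul1r mulr1.
  - by near=> q; apply: solve1; apply: Hphi; near: q.
  - exact: Hd.
  - exact: Hd.
have Dm : forall phi : int -> int -> Cx R -> Cx R,
   (forall q, U q -> forall k l : int, phi k (l + 1) q = phi (k + 1) l q - g k l * phi k l q) ->
   (forall k l : int, derivable (phi k l : (Cx R)^o -> (Cx R)^o) p 1) ->
   forall k l : int,
   derive1 (phi k (l + 1) : (Cx R)^o -> (Cx R)^o) p =
     derive1 (phi (k + 1) l : (Cx R)^o -> (Cx R)^o) p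
     - g k l * derive1 (phi k l : (Cx R)^o -> (Cx R)^o) p.
  move=> phi Hphi Hd k l.
  rewrite (@dlin R (phi k (l + 1)) (phi k l) (phi (k + 1) l) 1 0 (- g k l) p).
  - by rewrite !mul1r !mul0r !mulr0 !mul0r add0r addr0 mulNr.
  - near=> q. rewrite mul0r add0r mul1r (Hphi q _ k l); first by rewrite mulNr.
    by near: q.
  - exact: Hd.
  - exact: Hd.
have H1r : forall q, U q -> forall k l : int,
   phi1 (k + 2) l q + h k l * phi1 (k + 1) l q + alpha ^+ 2 * phi1 k l q = q ^+ 2 * phi1 k l q.
  by move=> q Uq k l; case: (Hsol q Uq k l).
have H1m : forall q, U q -> forall k l : int, phi1 k (l + 1) q = phi1 (k + 1) l q - g k l * phi1 k l q.
  by move=> q Uq k l; case: (Hsol q Uq k l) => _ [].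
have H2r : forall q, U q -> forall k l : int,
   phi2 (k + 2) l q + h k l * phi2 (k + 1) l q + alpha ^+ 2 * phi2 k l q = q ^+ 2 * phi2 k l q.
  by move=> q Uq k l; case: (Hsol q Uq k l) => _ [_ []].
have H2m : forall q, U q -> forall k l : int, phi2 k (l + 1) q = phi2 (k + 1) l q - g k l * phi2 k l q.
  by move=> q Uq k l; case: (Hsol q Uq k l) => _ [_ []].
have Hd1 : forall k l : int, derivable (phi1 k l : (Cx R)^o -> (Cx R)^o) p 1.
  by move=> k l; case: (Hdiff p Up k l).
have Hd2 : forall k l : int, derivable (phi2 k l : (Cx R)^o -> (Cx R)^o) p 1.
  by move=> k l; case: (Hdiff p Up k l).
have e11 : n + 1 + 1 = n + 2 by rewrite -addrA.
have e12 : n + 1 + 2 = n + 3 by rewrite -addrA.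
have e21 : n + 2 + 1 = n + 3 by rewrite -addrA.
have Vr : forall (phi : int -> int -> Cx R -> Cx R) k l,
   phi (k + 2) l p + h k l * phi (k + 1) l p + alpha ^+ 2 * phi k l p = p ^+ 2 * phi k l p ->
   phi (k + 2) l p = p ^+ 2 * phi k l p - h k l * phi (k + 1) l p - alpha ^+ 2 * phi k l p.
  by move=> phi k l E; rewrite -E; ring.
have Wt : 4 * p ^+ 2 * delta * s2 ^ (2 * n) * t2 ^ (2 * m) =
   4 * p ^+ 2 * (A * D - B ^+ 2) *
   (phi1 n m p * phi2 (n + 1) m p - phi2 n m p * phi1 (n + 1) m p) ^+ 2.
  rewrite (Hrho p Up n m) /delta /s2 /t2 [2 * n]mulrC [2 * m]mulrC -!exprz_exp.
  change ((alpha ^+ 2 - p ^+ 2) ^ n ^ (2%N : int)) with ((alpha ^+ 2 - p ^+ 2) ^ n ^+ 2).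
  change ((beta ^+ 2 - p ^+ 2) ^ m ^ (2%N : int)) with ((beta ^+ 2 - p ^+ 2) ^ m ^+ 2).
  ring.
rewrite Wt /X /chi /xij !e11.
have := (@alg (Cx R) A B D p (alpha ^+ 2) (beta ^+ 2) (h n m) (h (n + 1) m) (g n m) (g (n + 1) m) (g (n + 2) m)
  (phi1 n m p) (phi2 n m p) (phi1 (n + 1) m p) (phi2 (n + 1) m p)
  (phi1 (n + 2) m p) (phi2 (n + 2) m p) (phi1 (n + 3) m p) (phi2 (n + 3) m p)
  (phi1 n (m + 1) p) (phi2 n (m + 1) p) (phi1 (n + 1) (m + 1) p) (phi2 (n + 1) (m + 1) p)
  (phi1 (n + 2) (m + 1) p) (phi2 (n + 2) (m + 1) p)
  (derive1 (phi1 n m : (Cx R)^o -> (Cx R)^o) p) (derive1 (phi2 n m : (Cx R)^o -> (Cx R)^o) p)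
  (derive1 (phi1 (n + 1) m : (Cx R)^o -> (Cx R)^o) p) (derive1 (phi2 (n + 1) m : (Cx R)^o -> (Cx R)^o) p)
  (derive1 (phi1 (n + 2) m : (Cx R)^o -> (Cx R)^o) p) (derive1 (phi2 (n + 2) m : (Cx R)^o -> (Cx R)^o) p)
  (derive1 (phi1 (n + 3) m : (Cx R)^o -> (Cx R)^o) p) (derive1 (phi2 (n + 3) m : (Cx R)^o -> (Cx R)^o) p)
  (derive1 (phi1 n (m + 1) : (Cx R)^o -> (Cx R)^o) p) (derive1 (phi2 n (m + 1) : (Cx R)^o -> (Cx R)^o) p)
  (derive1 (phi1 (n + 1) (m + 1) : (Cx R)^o -> (Cx R)^o) p) (derive1 (phi2 (n + 1) (m + 1) : (Cx R)^o -> (Cx R)^o) p)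
  (derive1 (phi1 (n + 2) (m + 1) : (Cx R)^o -> (Cx R)^o) p) (derive1 (phi2 (n + 2) (m + 1) : (Cx R)^o -> (Cx R)^o) p)).
have K1 := Hhg2 n m. have K2 := Hhg2 (n + 1) m. rewrite e11 in K2.
move=> /(_ K1 K2).
move=> /(_ (Vr _ _ _ (H1r p Up n m)) (Vr _ _ _ (H2r p Up n m))).
move=> /(_ (Drec _ H1r Hd1 n m) (Drec _ H2r Hd2 n m)).
have := Vr _ _ _ (H1r p Up (n + 1) m); have := Vr _ _ _ (H2r p Up (n + 1) m).
have := Drec _ H1r Hd1 (n + 1) m; have := Drec _ H2r Hd2 (n + 1) m.
rewrite !e11 !e12 => D2 D1 V2 V1.
move=> /(_ V1 V2 D1 D2).
move=> /(_ (H1m p Up n m) (H2m p Up n m) (Dm _ H1m Hd1 n m) (Dm _ H2m Hd2 n m)).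
have := H1m p Up (n + 1) m; have := H2m p Up (n + 1) m.
have := Dm _ H1m Hd1 (n + 1) m; have := Dm _ H2m Hd2 (n + 1) m.
rewrite !e11 => DF2 DF1 F2 F1.
move=> /(_ F1 F2 DF1 DF2).
have := H1m p Up (n + 2) m; have := H2m p Up (n + 2) m.
have := Dm _ H1m Hd1 (n + 2) m; have := Dm _ H2m Hd2 (n + 2) m.
rewrite !e21 => DK2 DK1 K2' K1'.
move=> /(_ K1' K2' DK1 DK2).
exact.
Unshelve. all: by end_near.
Qed.
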